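(* Consider the AdaDROPS scheme described in the context (with either Option I or Option II), let $\bar{\mathcal{I}}$ be the set at which $\mathcal{I}^{(k)}$ eventually stabilizes, and assume the iterates $x^{(k)}$ converge to some $\tilde{x}\in\mathbb{R}^n$. Let $\tilde\beta=-\frac1\lambda A^\top(A\tilde{x}-y)$, $\bar L=L-P_{T_z(\bar{\mathcal{I}})}LP_{T(\bar{\mathcal{I}})^\perp}$ and $\bar u=\bar L(\bar L^\top\bar L)^{-1}\tilde\beta$. Then $\|\bar u_{J_t}\|\le1$ for every $t\in\{1,\dots,N\}\setminus\bar{\mathcal{I}}$.
   Context: Let $n,N\in\mathbb{N}$, let $G_1,\dots,G_N\subseteq\{1,\dots,n\}$ be nonempty groups, possibly overlapping, with $\bigcup_iG_i=\{1,\dots,n\}$, and weights $w_i>0$. $x_G$ is the subvector of $x$ indexed by $G$ (increasing order). Let $p=\sum_i|G_i|$, partition $\{1,\dots,p\}$ into consecutive blocks $J_i=\{\sum_{j<i}|G_j|+1,\dots,\sum_{j\le i}|G_j|\}$, and define $L\in\mathbb{R}^{p\times n}$ by $(Lx)_{J_i}=w_ix_{G_i}$; $\|z\|_{1,2}=\sum_i\|z_{J_i}\|$ (Euclidean). Let $A\in\mathbb{R}^{m\times n}$, $y\in\mathbb{R}^m$, $\lambda>0$. For $\mathcal{I}\subseteq\{1,\dots,N\}$: $\mathcal{E}(\mathcal{I})=\{1,\dots,n\}\setminus\bigcup_{t\notin\mathcal{I}}G_t$, $T(\mathcal{I})=\{x:\mathrm{supp}(x)\subseteq\mathcal{E}(\mathcal{I})\}$,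 $\mathcal{E}_z(\mathcal{I})=\bigcup_{t\in\mathcal{I}}J_t$, $T_z(\mathcal{I})=\{z:\mathrm{supp}(z)\subseteq\mathcal{E}_z(\mathcal{I})\}$, $\widehat{L}(\mathcal{I})=L-P_{T_z(\mathcal{I})}LP_{T(\mathcal{I})^\perp}$, with $P_T$ the orthogonal (coordinate) projection onto $T$; $\widehat{L}(\mathcal{I})^\top\widehat{L}(\mathcal{I})$ is invertible. AdaDROPS scheme: from $\mathcal{I}^{(0)}$, $x^{(0)}$, at step $k$ an inner solver produces $x^{(k+1)}$ (for the problem $\min_x\frac1{2\lambda}\|AP_{T(\mathcal{I}^{(k)})}x-y\|^2+\|LP_{T(\mathcal{I}^{(k)})}x\|_{1,2}$); with $\beta^{(k+1)}=-\frac1\lambda A^\top(Ax^{(k+1)}-y)$ the index set is updated by Option I: $\mathcal{I}^{(k+1)}=\mathcal{I}^{(k)}\cup\{t:\|\beta^{(k+1)}_{G_t}\|\ge w_t\}$, or Option II: with $u^{(k+1)}=\widehat{L}(\mathcal{I}^{(k)})(\widehat{L}(\mathcal{I}^{(k)})^\top\widehat{L}(\mathcal{I}^{(k)}))^{-1}\beta^{(k+1)}$, $\mathcal{I}^{(k+1)}=\mathcal{I}^{(k)}\cup\{t:\|u^{(k+1)}_{J_t}\|\ge1\}$. The nondecreasing sequence $\mathcal{I}^{(k)}$ stabilizes at some $\bar{\mathcal{I}}$. *)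

(* Defs.v *)
From mathcomp Require Import all_boot all_algebra all_classical all_reals all_analysis.
Import Num.Theory numFieldNormedType.Exports.
Unset Printing Implicit Defensive.
Local Open Scope ring_scope.

Section AdaDROPS.
Variables (R : realType) (n N : nat).
Variable (G : 'I_N -> {set 'I_n}).
Variable (w : 'I_N -> R).

Definition pdim : nat := (\sum_(i < N) #|G i|)%N.

(* first (0-based) row of block J_i : sum_{j<i} |G_j| *)
Definition bstart (i : 'I_N) : nat := (\sum_(j < N | (j < i)%N) #|G j|)%N.

Definition Jblk (i : 'I_N) : {set 'I_pdim} :=
  [set r : 'I_pdim | (bstart i <= r < bstart i + #|G i|)%N].

(* L : (L x)_{J_i} = w_i x_{G_i}, with G_i enumerated in increasing order:
   row  bstart i + o  of L is  w_i * e_{(o-th smallest element of G_i)}^T *)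
Definition Lmx : 'M[R]_(pdim, n) :=
  \matrix_(r < pdim, c < n)
    \sum_(i < N)
      (if (bstart i <= r < bstart i + #|G i|)%N
          && (val c == nth 0%N (map val (enum (G i))) (r - bstart i))
       then w i else 0).

Definition Eset (I : {set 'I_N}) : {set 'I_n} :=
  ~: \bigcup_(t | t \notin I) G t.

Definition Ezset (I : {set 'I_N}) : {set 'I_pdim} :=
  \bigcup_(t in I) Jblk t.

Definition coordproj m (S : {set 'I_m}) : 'M[R]_m :=
  \matrix_(i < m, j < m) (if (i == j) && (i \in S) then 1 else 0).

Definition P_T (I : {set 'I_N}) : 'M[R]_n := coordproj _ (Eset I).
Definition P_Tperp (I : {set 'I_N}) : 'M[R]_n := coordproj _ (~: Eset I).
Definition P_Tz (I : {set 'I_N}) : 'M[R]_pdim := coordproj _ (Ezset I).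

Definition Lhat (I : {set 'I_N}) : 'M[R]_(pdim, n) :=
  Lmx - P_Tz I *m Lmx *m P_Tperp I.

Definition gnorm (v : 'cV[R]_n) (t : 'I_N) : R :=
  Num.sqrt (\sum_(j in G t) (v j 0) ^+ 2).
Definition jnorm (z : 'cV[R]_pdim) (t : 'I_N) : R :=
  Num.sqrt (\sum_(r in Jblk t) (z r 0) ^+ 2).

Definition betaof m (A : 'M[R]_(m, n)) (y : 'cV[R]_m) (lambda : R)
  (x : 'cV[R]_n) : 'cV[R]_n :=
  - (lambda^-1 *: (A^T *m (A *m x - y))).

Definition uof (I : {set 'I_N}) (beta : 'cV[R]_n) : 'cV[R]_pdim :=
  Lhat I *m invmx ((Lhat I)^T *m Lhat I) *m beta.

Definition updateI (I : {set 'I_N}) (beta : 'cV[R]_n) : {set 'I_N} :=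
  I :|: [set t | w t <= gnorm beta t].

Definition updateII (I : {set 'I_N}) (beta : 'cV[R]_n) : {set 'I_N} :=
  I :|: [set t | 1 <= jnorm (uof I beta) t].

End AdaDROPS.

Arguments pdim {n N} G.
Arguments bstart {n N} G i.
Arguments Jblk {n N} G i.
Arguments Lmx {R n N} G w.
Arguments Eset {n N} G I.
Arguments Ezset {n N} G I.
Arguments coordproj {R} m S.
Arguments P_T {R n N} G I.
Arguments P_Tperp {R n N} G I.
Arguments P_Tz {R n N} G I.
Arguments Lhat {R n N} G w I.
Arguments gnorm {R n N} G v t.
Arguments jnorm {R n N} G z t.
Arguments betaof {R n} m A y lambda x.
Arguments uof {R n N} G w I beta.
Arguments updateI {R n N} G w I beta.
Arguments updateII {R n N} G w I beta.

(* Main.v *)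
Require Import Defs.
From mathcomp Require Import all_boot all_algebra all_classical all_reals all_analysis.
From mathcomp Require Import zify ring lra.
Import order.Order.TTheory GRing.Theory Num.Theory numFieldNormedType.Exports.
Local Open Scope ring_scope.

Section Lim.
Variable R : realType.

Lemma cvg_bigsum (T : Type) (F : set_system T) (FF : Filter F) (I : Type)
  (r : seq I) (P : pred I) (f : I -> T -> R) (l : I -> R) :
  (forall i, P i -> (f i @ F --> l i)%classic) ->
  ((fun x => \sum_(i <- r | P i) f i x) @ F --> \sum_(i <- r | P i) l i)%classic.
Proof.
move=> H; elim: r => [|a r IH].
  under eq_fun do rewrite big_nil; rewrite big_nil; exact: cvg_cst.
under eq_fun do rewrite big_cons; rewrite big_cons.
case: (boolP (P a)) => Pa //.
exact: (cvgD (H a Pa) IH).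
Qed.

Lemma lim_affine_le n q (xseq : nat -> 'cV[R]_n) (xt : 'cV[R]_n)
  (K : 'M[R]_(q, n)) (b : 'cV[R]_q) (S : {set 'I_q}) (c : R) :
  (xseq @ \oo --> xt)%classic ->
  (\forall k \near \oo, \sum_(r in S) ((K *m xseq k + b) r 0) ^+ 2 <= c)%classic ->
  \sum_(r in S) ((K *m xt + b) r 0) ^+ 2 <= c.
Proof.
move=> hx hev.
have hc : forall i j, ((fun k => xseq k i j) @ \oo --> xt i j)%classic.
  move=> i j; exact: (continuous_cvg _ (@coord_continuous R n 1 i j _) hx).
apply: (ler_cvg_to _ (@cvg_cst _ c _ _ _) hev).
apply: cvg_bigsum => r _.
have -> : (fun k => ((K *m xseq k + b) r 0) ^+ 2) = (fun k => ((K *m xseq k + b) r 0) * ((K *m xseq k + b) r 0)).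
  by apply: funext => k; rewrite expr2.
rewrite expr2.
have h1 : ((fun k => (K *m xseq k + b) r 0) @ \oo --> (K *m xt + b) r 0)%classic.
  under eq_fun do rewrite !mxE.
  rewrite !mxE.
  apply: cvgD; last exact: cvg_cst.
  apply: cvg_bigsum => c0 _.
  apply: cvgMl_tmp; exact: hc.
exact: (cvgM h1 h1).
Qed.
End Lim.

Section Struct.
Variables (R : realType) (n N : nat) (G : 'I_N -> {set 'I_n}) (w : 'I_N -> R).

Lemma bstart_lt (i j : 'I_N) : (i < j)%N -> (bstart G i + #|G i| <= bstart G j)%N.
Proof.
move=> ij.
have -> : (bstart G i + #|G i| = \sum_(k < N | (k < i.+1)%N) #|G k|)%N.
  rewrite (bigD1 i) //= addnC; congr (_ + _)%N.
  by apply: eq_bigl => k; rewrite ltnS ltn_neqAle andbC.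
rewrite /bstart [X in (_ <= X)%N](bigID (fun k : 'I_N => (k < i.+1)%N)) /=.
have -> : (\sum_(k < N | (k < j)%N && (k < i.+1)%N) #|G k| = \sum_(k < N | (k < i.+1)%N) #|G k|)%N.
  apply: eq_bigl => k; apply/andP/idP => [[]//|h]; split=> //.
  exact: leq_trans h ij.
exact: leq_addr.
Qed.

Lemma Jblk_disj (i j : 'I_N) (r : 'I_(pdim G)) :
  r \in Jblk G i -> r \in Jblk G j -> i = j.
Proof.
rewrite !inE => /andP[h1 h2] /andP[h3 h4].
case: (ltngtP i j) => [ij|ji|/val_inj //].
  have := bstart_lt _ _ ij; lia.
have := bstart_lt _ _ ji; lia.
Qed.

Lemma coordprojMl m k (S : {set 'I_m}) (X : 'M[R]_(m, k)) r c :
  (coordproj m S *m X) r c = if r \in S then X r c else 0.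
Proof.
rewrite mxE (bigD1 r) //= big1 => [|j /negbTE jr]; last by rewrite mxE eq_sym jr mul0r.
by rewrite mxE eqxx /=; case: (r \in S); rewrite ?mul1r ?mul0r addr0.
Qed.

Lemma coordprojMr m k (S : {set 'I_k}) (X : 'M[R]_(m, k)) r c :
  (X *m coordproj k S) r c = if c \in S then X r c else 0.
Proof.
rewrite mxE (bigD1 c) //= big1 => [|j /negbTE jr]; last by rewrite mxE jr mulr0.
by rewrite mxE eqxx /=; case: (c \in S); rewrite ?mulr1 ?mulr0 addr0.
Qed.

Lemma Lhat_entry I r c :
  Lhat G w I r c = if (r \in Ezset G I) && (c \notin Eset G I) then 0 else Lmx G w r c.
Proof.
rewrite /Lhat; set L := Lmx G w.
rewrite mxE [X in _ + X]mxE /P_Tperp coordprojMr /P_Tz coordprojMl inE.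
by case: (r \in Ezset G I); case: (c \notin Eset G I); rewrite /= ?subr0 ?subrr.
Qed.


Lemma Lmx_nz r c : Lmx G w r c != 0 ->
  exists2 i, r \in Jblk G i & val c == nth 0%N (map val (enum (G i))) (r - bstart G i).
Proof.
move=> /eqP Hnz.
case: (pselect (exists2 i, r \in Jblk G i & val c == nth 0%N (map val (enum (G i))) (r - bstart G i))) => // H.
exfalso; apply: Hnz; rewrite mxE big1 // => i _.
case: ifP => // /andP[h1 h2]; exfalso; apply: H; exists i => //.
by rewrite inE.
Qed.

Lemma Lmx_blk t r c : r \in Jblk G t ->
  Lmx G w r c = if val c == nth 0%N (map val (enum (G t))) (r - bstart G t) then w t else 0.
Proof.
move=> rt; rewrite mxE (bigD1 t) //= big1 => [|i it].
  by move: (rt); rewrite inE => -> /=; rewrite addr0.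
case: ifP => // /andP[h1 _]; exfalso.
have ri : r \in Jblk G i by rewrite inE.
by move: it; rewrite (Jblk_disj _ _ _ ri rt) eqxx.
Qed.

Lemma Lhat_row_uniq (I : {set 'I_N}) r c c' : Lhat G w I r c != 0 -> Lhat G w I r c' != 0 -> c = c'.
Proof.
rewrite !Lhat_entry.
case: ifP => [_|_]; first by rewrite eqxx.
case: ifP => [_ _|_]; first by rewrite eqxx.
move=> /Lmx_nz[i ri ci] /Lmx_nz[j rj cj].
move: cj; rewrite -(Jblk_disj _ _ _ ri rj) => cj.
by apply: val_inj; rewrite (eqP ci) (eqP cj).
Qed.

Lemma Lhat_blk (I : {set 'I_N}) t r c : t \notin I -> r \in Jblk G t -> Lhat G w I r c = Lmx G w r c.
Proof.
move=> tI rt; rewrite Lhat_entry.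
suff -> : (r \in Ezset G I) = false by [].
apply/negP => /bigcupP[s sI rs].
by move: tI; rewrite -(Jblk_disj _ _ _ rs rt) sI.
Qed.


Lemma key (I : {set 'I_N}) (t : 'I_N) (beta : 'cV[R]_n) :
  (Lhat G w I)^T *m Lhat G w I \in unitmx -> t \notin I -> 0 < w t -> G t != finset.set0 ->
  \sum_(g in G t) (beta g 0) ^+ 2 <= w t ^+ 2 ->
  \sum_(r in Jblk G t) ((uof G w I beta) r 0) ^+ 2 <= 1.
Proof.
move=> hU tI wt0 /set0Pn[x0 _] hsum.
set Lb := Lhat G w I.
set M := Lb^T *m Lb.
set v := invmx M *m beta.
have hu : uof G w I beta = Lb *m v by rewrite /uof -mulmxA.
have hb : beta = M *m v by rewrite /v mulKVmx.
have Mdiag : forall g c, g != c -> M g c = 0.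
  move=> g c gc; rewrite mxE big1 // => r _; rewrite mxE.
  case: (eqVneq (Lb r g) 0) => [->|h1]; first by rewrite mul0r.
  case: (eqVneq (Lb r c) 0) => [->|h2]; first by rewrite mulr0.
  by rewrite (Lhat_row_uniq _ _ _ _ h1 h2) eqxx in gc.
have hbeta : forall g, beta g 0 = M g g * v g 0.
  move=> g; rewrite {1}hb mxE (bigD1 g) //= big1 ?addr0 // => c cg.
  by rewrite Mdiag ?mul0r // eq_sym.
pose gr := fun r : 'I_(pdim G) => nth x0 (enum (G t)) (r - bstart G t).
have hsz : forall r, r \in Jblk G t -> (r - bstart G t < size (enum (G t)))%N.
  by move=> r; rewrite -cardE inE => /andP[h1 h2]; lia.
have hLr : forall r c, r \in Jblk G t -> Lb r c = if c == gr r then w t else 0.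
  move=> r c rt; rewrite /Lb (Lhat_blk _ t) // (Lmx_blk t) //.
  by rewrite (nth_map x0) ?hsz.
have hur : forall r, r \in Jblk G t -> (Lb *m v) r 0 = w t * v (gr r) 0.
  move=> r rt; rewrite mxE (bigD1 (gr r)) //= big1 ?addr0 => [|c cg].
    by rewrite hLr // eqxx.
  by rewrite hLr // (negbTE cg) mul0r.
have hM : forall r, r \in Jblk G t -> w t ^+ 2 <= M (gr r) (gr r).
  move=> r rt; rewrite mxE (bigD1 r) //= mxE hLr // eqxx -expr2 lerDl.
  by apply: sumr_ge0 => r' _; rewrite mxE -expr2 sqr_ge0.
have hgr : forall r, r \in Jblk G t -> gr r \in G t.
  by move=> r rt; rewrite -mem_enum mem_nth ?hsz.
have inj : {in Jblk G t &, injective gr}.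
  move=> r r' rt r't /eqP; rewrite /gr nth_uniq ?hsz ?enum_uniq // => /eqP h.
  apply: ord_inj; move: rt r't h; rewrite !inE => /andP[? ?] /andP[? ?] ?.
lia.
rewrite hu.
have w20 : 0 < w t ^+ 2 by rewrite exprn_gt0.
apply: (@le_trans _ _ (\sum_(r in Jblk G t) (beta (gr r) 0) ^+ 2 / w t ^+ 2)).
  apply: ler_sum => r rt; rewrite hur // hbeta.
  rewrite ler_pdivlMr //.
  have := hM r rt; set m := M _ _; set a := w t; set b := v _ _ => hm.
  have a2 : 0 <= a ^+ 2 by rewrite sqr_ge0.
  have -> : (a * b) ^+ 2 * a ^+ 2 = (a ^+ 2 * a ^+ 2) * b ^+ 2 by ring.
  have -> : (m * b) ^+ 2 = (m * m) * b ^+ 2 by ring.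
  apply: ler_wpM2r; first exact: sqr_ge0.
  by apply: ler_pM.
rewrite -mulr_suml ler_pdivrMr // mul1r -(big_imset (fun g => beta g 0 ^+ 2) inj).
apply: le_trans hsum.
rewrite [X in _ <= X](big_setID [set gr x | x in Jblk G t]) /=.
have -> : G t :&: [set gr x | x in Jblk G t] = [set gr x | x in Jblk G t].
  rewrite finset.setIC; apply/finset.setIidPl; apply/fintype.subsetP => g /imsetP[r rt ->]; exact: hgr.
rewrite lerDl; apply: sumr_ge0 => g _; exact: sqr_ge0.
Qed.

End Struct.

Lemma betaE (R : realType) n m (A : 'M[R]_(m, n)) y lambda x :
  betaof m A y lambda x = (- lambda^-1 *: (A^T *m A)) *m x + lambda^-1 *: (A^T *m y).
Proof.
rewrite /betaof mulmxBr mulmxA scalerBr opprB addrC -scalemxAl scaleNr.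
by [].
Qed.

Lemma sqrt_lt_sq (R : realType) (s a : R) : 0 <= s -> Num.sqrt s < a -> s <= a ^+ 2.
Proof.
move=> s0 h; rewrite -(sqr_sqrtr s0) !expr2.
have h' := ltW h.
by apply: ler_pM; rewrite ?sqrtr_ge0.
Qed.

Theorem lemma4p1 (R : realType) (n N m : nat)
  (G : 'I_N -> {set 'I_n}) (w : 'I_N -> R)
  (A : 'M[R]_(m, n)) (y : 'cV[R]_m) (lambda : R)
  (Iseq : nat -> {set 'I_N}) (xseq : nat -> 'cV[R]_n)
  (Ibar : {set 'I_N}) (xt : 'cV[R]_n) :
  (forall i, G i != finset.set0) ->
  \bigcup_(i < N) G i = [set: 'I_n] ->
  (forall i, 0 < w i) ->
  0 < lambda ->
  (forall I : {set 'I_N}, (Lhat G w I)^T *m Lhat G w I \in unitmx) ->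
  ((forall k, Iseq k.+1 = updateI G w (Iseq k) (betaof _ A y lambda (xseq k.+1)))
   \/
   (forall k, Iseq k.+1 = updateII G w (Iseq k) (betaof _ A y lambda (xseq k.+1)))) ->
  (exists K, forall k, (K <= k)%N -> Iseq k = Ibar) ->
  (xseq @ \oo --> xt)%classic ->
  forall t : 'I_N, t \notin Ibar ->
    jnorm G (uof G w Ibar (betaof _ A y lambda xt)) t <= 1.
Proof.
move=> hG hcov hw hl hU hupd [K hK] hx t tI.
set Kb := (- lambda^-1 *: (A^T *m A)).
set bb := lambda^-1 *: (A^T *m y).
have hsum0 : forall q (S : {set 'I_q}) (z : 'cV[R]_q), 0 <= \sum_(r in S) (z r 0) ^+ 2.
  by move=> q S z; apply: sumr_ge0 => r _; exact: sqr_ge0.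
have hKk : forall k, (K < k)%N -> t \notin Iseq k.
  move=> k hk; rewrite (hK k) //; exact: ltnW.
case: hupd => hI.
- have ev : \sum_(g in G t) ((Kb *m xt + bb) g 0) ^+ 2 <= w t ^+ 2.
    apply: (@lim_affine_le R n _ xseq xt _ _ _ _ hx).
    exists K.+1 => // k /= hk.
    rewrite -betaE.
    case: k hk => [//|k] hk.
    have := hKk k.+1 hk; rewrite hI /updateI !inE negb_or => /andP[_].
    rewrite -ltNge => hlt.
    exact: sqrt_lt_sq _ _ _ (hsum0 _ _ _) hlt.
  rewrite -betaE in ev.
  rewrite /jnorm -sqrtr1 ler_sqrt //.
  exact: key.
- set Ku := Lhat G w Ibar *m invmx ((Lhat G w Ibar)^T *m Lhat G w Ibar).
  have ev : \sum_(r in Jblk G t) ((Ku *m (Kb *m xt + bb)) r 0) ^+ 2 <= 1.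
    rewrite mulmxDr mulmxA.
    apply: (@lim_affine_le R n _ xseq xt _ _ _ _ hx).
    exists K.+1 => // k /= hk.
    rewrite -mulmxA -mulmxDr -betaE.
    case: k hk => [//|k] hk.
    have := hKk k.+1 hk; rewrite hI /updateII !inE negb_or => /andP[_].
    rewrite -ltNge => hlt.
    rewrite (hK k) // /jnorm in hlt.
    by have := sqrt_lt_sq _ _ _ (hsum0 _ _ _) hlt; rewrite expr1n.
  rewrite -betaE in ev.
  by rewrite /jnorm -sqrtr1 ler_sqrt.
Qed.
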